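(* Let $\mathcal H_C$ be a finite-dimensional Hilbert space and let $\{\sigma^{(\mathrm{target})}_{b|x}\}_{b,x\in\{0,1\}}$ be any bipartite assemblage on $\mathcal H_C$. Define the tripartite family $$\sigma^{(\mathrm{initial})}_{a,b|x,y}:=\tfrac12\,\sigma^{(\mathrm{target})}_{b|x\oplus a\oplus y},\qquad a,b,x,y\in\{0,1\}.$$ Likewise, let $P^{(\mathrm{target})}(b,c|x,z)$, with $b,x\in\{0,1\}$ and $c,z$ ranging over finite sets, be any bipartite Bell behavior, and define $$P^{(\mathrm{initial})}(a,b,c|x,y,z):=\tfrac12\,P^{(\mathrm{target})}(b,c|x\oplus a\oplus y,z).$$ Then: (i) applying the wiring $y=a$ yields the targets: $\sum_{a}\sigma^{(\mathrm{initial})}_{a,b|x,a}=\sigma^{(\mathrm{target})}_{b|x}$ and $\sum_a P^{(\mathrm{initial})}(a,b,c|x,a,z)=P^{(\mathrm{target})}(b,c|x,z)$ for all $b,c,x,z$; (ii) $\sigma^{(\mathrm{initial})}$ admits a local hidden-state (LHS) model across the bipartition $AB|C$, and $P^{(\mathrm{initial})}$ admits a local hidden-variable (LHV) model across the bipartition $AB|C$, for every choice of target.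
   Context: $\oplus$ denotes addition modulo 2. A bipartite assemblage $\{\sigma_{b|x}\}$ on $\mathcal H_C$ is a family of positive semidefinite operators on $\mathcal H_C$ such that $\sum_b\sigma_{b|x}$ is a density operator (trace one) independent of $x$. A bipartite Bell behavior $P(b,c|x,z)$ is a family of conditional probability distributions of outputs $(b,c)$ given inputs $(x,z)$ that is non-signaling: $\sum_c P(b,c|x,z)$ is independent of $z$ and $\sum_b P(b,c|x,z)$ is independent of $x$. A tripartite family $\{\sigma_{a,b|x,y}\}$ of positive semidefinite operators on $\mathcal H_C$ admits an LHS model across $AB|C$ if there exist a finite set of values $\lambda$, probabilities $P_\lambda\ge0$ summing to one, conditional probability distributions $P_{a,b|x,y,\lambda}$ (arbitrary, i.e. not required to be non-signaling between $a$ and $b$), and density operators $\varrho_\lambda$ on $\mathcal H_C$ such that $\sigma_{a,b|x,y}=\sum_\lambda P_\lambda P_{a,b|x,y,\lambda}\varrho_\lambda$ for all $a,b,x,y$. A tripartite distribution $P(a,b,c|x,y,z)$ admits an LHV model across $AB|C$ if there exist a finite set of $\lambda$, probabilities $P_\lambda$, arbitrary conditional distributions $P(a,b|x,y,\lambda)$ and conditional distributions $P(c|z,\lambda)$ with $P(a,b,c|x,y,z)=\sum_\lambda P_\lambda P(a,b|x,y,\lambda)P(c|z,\lambda)$. *)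

(* Defs.v *)
From HB Require Import structures.
From mathcomp Require Import all_boot all_order all_algebra.
Set Implicit Arguments. Unset Strict Implicit. Unset Printing Implicit Defensive.
Import Order.TTheory GRing.Theory Num.Theory.
Local Open Scope ring_scope.

(* H_C = C^n, C an algebraically closed numeric field (e.g. the complex numbers). *)
Definition adjmx (C : numClosedFieldType) (m n : nat) (A : 'M[C]_(m, n)) : 'M[C]_(n, m) :=
  (map_mx Num.conj A)^T.

Definition psd (C : numClosedFieldType) (n : nat) (A : 'M[C]_n) : Prop :=
  adjmx A = A /\ forall v : 'cV[C]_n, 0 <= ((adjmx v) *m A *m v) ord0 ord0.

Definition density (C : numClosedFieldType) (n : nat) (A : 'M[C]_n) : Prop :=
  psd A /\ \tr A = 1.

Definition assemblage (C : numClosedFieldType) (n : nat)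
  (sigma : bool -> bool -> 'M[C]_n) : Prop :=
  (forall b x, psd (sigma b x)) /\
  exists rho : 'M[C]_n, density rho /\ forall x, \sum_(b : bool) sigma b x = rho.

Definition bell_behavior (R : realFieldType) (Cc Z : finType)
  (P : bool -> Cc -> bool -> Z -> R) : Prop :=
  (forall b c x z, 0 <= P b c x z) /\
  (forall x z, \sum_(b : bool) \sum_(c : Cc) P b c x z = 1) /\
  (forall b x z z', \sum_(c : Cc) P b c x z = \sum_(c : Cc) P b c x z') /\
  (forall c x x' z, \sum_(b : bool) P b c x z = \sum_(b : bool) P b c x' z).

Definition sigma_initial (C : numClosedFieldType) (n : nat)
  (sigma : bool -> bool -> 'M[C]_n) (a b x y : bool) : 'M[C]_n :=
  (1 / 2 : C) *: sigma b (xorb (xorb x a) y).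

Definition P_initial (R : realFieldType) (Cc Z : finType)
  (P : bool -> Cc -> bool -> Z -> R) (a b : bool) (c : Cc) (x y : bool) (z : Z) : R :=
  (1 / 2 : R) * P b c (xorb (xorb x a) y) z.

Definition LHS_model (C : numClosedFieldType) (n : nat)
  (s : bool -> bool -> bool -> bool -> 'M[C]_n) : Prop :=
  exists (L : finType) (pl : L -> C) (pab : L -> bool -> bool -> bool -> bool -> C)
         (rho : L -> 'M[C]_n),
    (forall l, 0 <= pl l) /\ \sum_(l : L) pl l = 1 /\
    (forall l a b x y, 0 <= pab l a b x y) /\
    (forall l x y, \sum_(a : bool) \sum_(b : bool) pab l a b x y = 1) /\
    (forall l, density (rho l)) /\
    (forall a b x y, s a b x y = \sum_(l : L) (pl l * pab l a b x y) *: rho l).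

Definition LHV_model (R : realFieldType) (Cc Z : finType)
  (P : bool -> bool -> Cc -> bool -> bool -> Z -> R) : Prop :=
  exists (L : finType) (pl : L -> R) (pab : L -> bool -> bool -> bool -> bool -> R)
         (pc : L -> Cc -> Z -> R),
    (forall l, 0 <= pl l) /\ \sum_(l : L) pl l = 1 /\
    (forall l a b x y, 0 <= pab l a b x y) /\
    (forall l x y, \sum_(a : bool) \sum_(b : bool) pab l a b x y = 1) /\
    (forall l c z, 0 <= pc l c z) /\
    (forall l z, \sum_(c : Cc) pc l c z = 1) /\
    (forall a b c x y z,
        P a b c x y z = \sum_(l : L) pl l * pab l a b x y * pc l c z).

(* Main.v *)
Require Import Defs.
From HB Require Import structures.
From mathcomp Require Import all_boot all_order all_algebra.
From mathcomp Require Import ring.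
Import Order.TTheory GRing.Theory Num.Theory.
Local Open Scope ring_scope.

Section M.
Variable C : numClosedFieldType.
Variable n : nat.

Lemma adjmxE m p (A : 'M[C]_(m,p)) i j : adjmx A i j = (A j i)^*.
Proof. by rewrite /adjmx !mxE. Qed.

Lemma sum_delta_r (F : 'I_n -> C) a : \sum_j F j * (j == a)%:R = F a.
Proof.
rewrite (bigD1 a) //= eqxx mulr1 big1 ?addr0 // => j /negPf ->; by rewrite mulr0.
Qed.
Lemma sum_delta_l (F : 'I_n -> C) a : \sum_j (j == a)%:R * F j = F a.
Proof. rewrite -[RHS]sum_delta_r; apply: eq_bigr => j _; exact: mulrC. Qed.

Lemma sum_lin_l (F : 'I_n -> C) a b c :
  \sum_i ((i == a)%:R + c * (i == b)%:R) * F i = F a + c * F b.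
Proof.
under eq_bigr => i _ do rewrite mulrDl -mulrA.
by rewrite big_split /= sum_delta_l -mulr_sumr sum_delta_l.
Qed.
Lemma sum_lin_r (F : 'I_n -> C) a b c :
  \sum_i F i * ((i == a)%:R + c * (i == b)%:R) = F a + c * F b.
Proof. rewrite -[RHS]sum_lin_l; apply: eq_bigr => j _; exact: mulrC. Qed.

Lemma quad2 (A : 'M[C]_n) a b s :
  ((adjmx (\col_k ((k == a)%:R + s * (k == b)%:R) : 'cV[C]_n)) *m A *m (\col_k ((k == a)%:R + s * (k == b)%:R))) ord0 ord0 =
  (A a a + s^* * A b a) + s * (A a b + s^* * A b b).
Proof.
rewrite mxE.
under eq_bigr => j _ do rewrite mxE.
under eq_bigr => j _ do under eq_bigr => i _ do
  rewrite adjmxE mxE rmorphD rmorphM /= !rmorph_nat.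
under eq_bigr => j _ do rewrite sum_lin_l mxE.
by rewrite sum_lin_r.
Qed.
Lemma psd_diag (A : 'M[C]_n) a : psd A -> 0 <= A a a.
Proof.
move=> [_ H]; have := H (\col_k ((k == a)%:R + 0 * (k == a)%:R)).
by rewrite quad2 rmorph0 !mul0r !addr0.
Qed.

Lemma tr_ge0 (A : 'M[C]_n) : psd A -> 0 <= \tr A.
Proof. move=> H; rewrite /mxtrace; apply: sumr_ge0 => i _; exact: psd_diag. Qed.

Lemma psd_tr0 (A : 'M[C]_n) : psd A -> \tr A = 0 -> A = 0.
Proof.
move=> HA Ht.
have Hd : forall i, A i i = 0.
  move=> i; apply: (psumr_eq0P (P := xpredT) (F := fun i => A i i)) => //.
  by move=> j _; exact: psd_diag.
apply/matrixP => a b; rewrite mxE.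
have Hh : A b a = (A a b)^*.
  by case: HA => [E _]; rewrite -{1}E adjmxE.
case: HA => _ H; have := H (\col_k ((k == a)%:R + (- (A a b)^*) * (k == b)%:R)).
rewrite quad2 !Hd Hh.
set z := A a b.
have -> : 0 + (- z^*)^* * z^* + - z^* * (z + (- z^*)^* * 0) = - (z * z^* + z * z^*).
  by rewrite rmorphN /= conjCK; ring.
rewrite oppr_ge0 => H3.
apply/eqP; rewrite -mul_conjC_eq0; apply/eqP.
apply: le_anti; rewrite mul_conjC_ge0 andbT.
apply: le_trans H3; by rewrite lerDl mul_conjC_ge0.
Qed.
Lemma psd_scale (c : C) (A : 'M[C]_n) : 0 <= c -> psd A -> psd (c *: A).
Proof.
move=> c0 [E H]; split.
  apply/matrixP => i j; rewrite adjmxE !mxE rmorphM /= conj_Creal ?ger0_real //.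
  by rewrite -adjmxE E.
move=> v; rewrite -scalemxAr -scalemxAl mxE; exact: mulr_ge0.
Qed.
End M.

Lemma sum_pair (V : nmodType) (F : bool * bool -> V) :
  \sum_(l : bool * bool) F l = F (true,true) + F (true,false) + (F (false,true) + F (false,false)).
Proof.
rewrite (eq_bigr (fun p => F (p.1, p.2))); last by case.
by rewrite -(pair_bigA _ (fun i j => F (i, j))) /= !big_bool.
Qed.

Lemma part1 (C : numClosedFieldType) (n : nat) (sigma : bool -> bool -> 'M[C]_n) :
     assemblage sigma ->
     (forall b x, \sum_(a : bool) sigma_initial sigma a b x a = sigma b x) /\
     LHS_model (sigma_initial sigma).
Proof.
move=> [Hpsd [rho [[Hrho Htr] Hsum]]]; split.
  have xK : forall x a, xorb (xorb x a) a = x by do 2 case.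
  move=> b x; rewrite big_bool /sigma_initial /= !xK -scalerDl -splitr scale1r //.
pose t b k := \tr (sigma b k).
have t0 : forall b k, 0 <= t b k by move=> b k; apply: tr_ge0.
have tsum : forall k, t true k + t false k = 1.
  by move=> k; rewrite /t -mxtraceD -Htr -(Hsum k) big_bool.
pose rhoL (l : bool * bool) := if t l.1 l.2 == 0 then rho else (t l.1 l.2)^-1 *: sigma l.1 l.2.
pose pl (l : bool * bool) := t l.1 l.2 / 2.
pose pab (l : bool * bool) (a b x y : bool) : C := ((b == l.1) && (a == xorb (xorb x y) l.2))%:R.
have key : forall l, pl l *: rhoL l = (1/2) *: sigma l.1 l.2.
  move=> l; rewrite /pl /rhoL; case: eqP => [E|E].
    have -> : sigma l.1 l.2 = 0 by apply: psd_tr0.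
    by rewrite E mul0r scale0r scaler0.
  by rewrite scalerA mulrAC divff ?mul1r //; apply/eqP.
exists (bool * bool)%type, pl, pab, rhoL.
split; first by move=> l; rewrite /pl divr_ge0.
split.
  rewrite sum_pair /pl /=.
  have -> : t true true / 2 + t true false / 2 + (t false true / 2 + t false false / 2)
     = (t true true + t false true) / 2 + (t true false + t false false) / 2 by ring.
  by rewrite !tsum -splitr.
split; first by move=> *; rewrite /pab ler0n.
split; first by move=> [b0 k] x y; rewrite !big_bool /pab /=; case: b0; case: k; case: x; case: y; rewrite /= ?addr0 ?add0r.
split.
  move=> l; rewrite /rhoL; case: eqP => [_|E]; first by split.
  split; first by apply: psd_scale; rewrite ?invr_ge0.
  by rewrite mxtraceZ mulVf //; apply/eqP.
move=> a b x y.
under eq_bigr => l _ do rewrite mulrC -scalerA key.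
rewrite sum_pair /pab /sigma_initial /=.
by case: a; case: b; case: x; case: y; rewrite /= ?scale1r ?scale0r ?addr0 ?add0r.
Qed.

Lemma part2 (R : realFieldType) (Cc Z : finType) (P : bool -> Cc -> bool -> Z -> R) :
     bell_behavior P ->
     (forall b c x z, \sum_(a : bool) P_initial P a b c x a z = P b c x z) /\
     LHV_model (P_initial P).
Proof.
move=> [Hnn [Hnorm [HnsB HnsC]]]; split.
  have xK : forall x a, xorb (xorb x a) a = x by do 2 case.
  move=> b c x z; rewrite big_bool /P_initial /= !xK -mulrDl -splitr mul1r //.
pose PB b k := match [pick z : Z] with Some z0 => \sum_c P b c k z0 | None => 1/2 end.
have HPB : forall b k z, PB b k = \sum_c P b c k z.
  move=> b k z; rewrite /PB; case: pickP => [z0 _|H]; first exact: HnsB.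
  by have := H z.
have PBsum : forall k, PB true k + PB false k = 1.
  move=> k; rewrite /PB; case: pickP => [z0 _|H]; last by rewrite -splitr.
  by rewrite -(Hnorm k z0) big_bool.
have PB0 : forall b k, 0 <= PB b k.
  move=> b k; rewrite /PB; case: pickP => [z0 _|H]; last by rewrite divr_ge0 ?ler01 ?ler0n.
  by apply: sumr_ge0 => c _.
pose pl (l : bool * bool) := PB l.1 l.2 / 2.
pose pab (l : bool * bool) (a b x y : bool) : R := ((b == l.1) && (a == xorb (xorb x y) l.2))%:R.
pose pc (l : bool * bool) (c : Cc) (z : Z) :=
  if PB l.1 l.2 == 0 then \sum_b P b c l.2 z else P l.1 c l.2 z / PB l.1 l.2.
have key : forall l c z, PB l.1 l.2 * pc l c z = P l.1 c l.2 z.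
  move=> l c z; rewrite /pc; case: eqP => [E|E]; last by rewrite mulrC divfK //; apply/eqP.
  rewrite E mul0r; symmetry.
  apply: (psumr_eq0P (P := xpredT) (F := fun c => P l.1 c l.2 z)) => //.
  by rewrite -HPB.
exists (bool * bool)%type, pl, pab, pc.
split; first by move=> l; rewrite /pl divr_ge0 ?ler0n.
split.
  rewrite sum_pair /pl /=.
  have -> : PB true true / 2 + PB true false / 2 + (PB false true / 2 + PB false false / 2)
     = (PB true true + PB false true) / 2 + (PB true false + PB false false) / 2 by ring.
  by rewrite !PBsum -splitr.
split; first by move=> *; rewrite /pab ler0n.
split; first by move=> [b0 k] x y; rewrite !big_bool /pab /=; case: b0; case: k; case: x; case: y; rewrite /= ?addr0 ?add0r.
split.
  move=> l c z; rewrite /pc; case: eqP => [_|E]; first by apply: sumr_ge0.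
  by rewrite divr_ge0.
split.
  move=> l z; rewrite /pc; case: eqP => [_|E].
    by rewrite exchange_big /= Hnorm.
  by rewrite -mulr_suml -HPB divff //; apply/eqP.
move=> a b c x y z.
have Ee : forall l, pl l * pab l a b x y * pc l c z = pab l a b x y * (1/2 * P l.1 c l.2 z).
  by move=> l; rewrite -(key l c z) /pl; ring.
under eq_bigr => l _ do rewrite Ee.
rewrite sum_pair /pab /P_initial /=.
clear Ee; by case: a; case: b; case: x; case: y; rewrite /= ?mul1r ?mul0r ?addr0 ?add0r.
Qed.

Theorem theorem1 :
  (forall (C : numClosedFieldType) (n : nat) (sigma : bool -> bool -> 'M[C]_n),
     assemblage sigma ->
     (forall b x, \sum_(a : bool) sigma_initial sigma a b x a = sigma b x) /\
     LHS_model (sigma_initial sigma)) /\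
  (forall (R : realFieldType) (Cc Z : finType) (P : bool -> Cc -> bool -> Z -> R),
     bell_behavior P ->
     (forall b c x z, \sum_(a : bool) P_initial P a b c x a z = P b c x z) /\
     LHV_model (P_initial P)).
Proof. split; [exact: part1 | exact: part2]. Qed.
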